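(* The number of transversals in any symmetric latin square of order $n$ is congruent to $n$ modulo $2$.
   Context: A latin square $L=[l_{ij}]$ of order $n$ is an $n\times n$ array of $n$ symbols in which each symbol occurs exactly once in each row and column; it is symmetric if $l_{ij}=l_{ji}$ for all $i,j$. A transversal is a set of $n$ cells, one from each row and one from each column, no two containing the same symbol. *)

(* Defs.v *)
From mathcomp Require Import all_boot.
Set Implicit Arguments. Unset Strict Implicit. Unset Printing Implicit Defensive.

Definition latin_square (n : nat) (S : finType) (L : 'I_n -> 'I_n -> S) : Prop :=
  [/\ #|S| = n,
      forall i : 'I_n, bijective (L i) &
      forall j : 'I_n, bijective (fun i => L i j)].

Definition symmetric_square (n : nat) (S : Type) (L : 'I_n -> 'I_n -> S) : Prop :=
  forall i j, L i j = L j i.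

Definition is_transversal (n : nat) (S : finType) (L : 'I_n -> 'I_n -> S)
    (T : {set 'I_n * 'I_n}) : bool :=
  [&& #|T| == n,
      [forall i : 'I_n, #|[set c in T | c.1 == i]| == 1],
      [forall j : 'I_n, #|[set c in T | c.2 == j]| == 1] &
      [forall c in T, forall d in T, (L c.1 c.2 == L d.1 d.2) ==> (c == d)]].

Definition num_transversals (n : nat) (S : finType) (L : 'I_n -> 'I_n -> S) : nat :=
  #|[set T : {set 'I_n * 'I_n} | is_transversal L T]|.

(* Main.v *)
Require Import Defs.
From mathcomp Require Import all_boot.
Set Implicit Arguments. Unset Strict Implicit. Unset Printing Implicit Defensive.

Lemma invol_parity (T : finType) (f : T -> T) (A : {set T}) :
  involutive f -> (forall x, x \in A -> f x \in A) ->
  #|A| = #|[set x in A | f x == x]| %[mod 2].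
Proof.
move=> finv fA.
set F := [set x in A | f x == x].
set B1 := [set x in A | enum_rank x < enum_rank (f x)].
set B2 := [set x in A | enum_rank (f x) < enum_rank x].
have eB2 : B2 = f @: B1.
  apply/setP=> x; apply/idP/imsetP.
  - rewrite inE => /andP[xA lt]; exists (f x); last by rewrite finv.
    by rewrite inE fA // finv.
  - by case=> y; rewrite inE => /andP[yA lt] ->; rewrite inE fA // finv.
have cB2 : #|B2| = #|B1| by rewrite eB2 card_imset //; exact: inv_inj.
have eA : A = F :|: (B1 :|: B2).
  apply/setP=> x; rewrite !inE.
  case xA: (x \in A) => //=.
  case: (eqVneq (f x) x) => //= ne.
  case: (ltngtP (enum_rank x) (enum_rank (f x))) => //= e.
  by move/ord_inj/enum_rank_inj: e => e; rewrite -e eqxx in ne.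
have d1 : F :&: (B1 :|: B2) = set0.
  apply/setP=> x; rewrite !inE.
  case: (x \in A) => //=; case: eqP => //= ->; by rewrite ltnn.
have d2 : B1 :&: B2 = set0.
  apply/setP=> x; rewrite !inE.
  case: (x \in A) => //=; apply/negP => /andP[a b].
  by have := ltn_trans a b; rewrite ltnn.
rewrite {1}eA cardsU d1 cards0 subn0 cardsU d2 cards0 subn0 cB2.
by rewrite addnn -muln2 addnC modnMDl.
Qed.

Definition swp n (c : 'I_n * 'I_n) : 'I_n * 'I_n := (c.2, c.1).

Arguments swp {n}.

Lemma swpK n : involutive (@swp n).
Proof. by case. Qed.

Lemma swp_inj n : injective (@swp n).
Proof. exact: inv_inj (@swpK n). Qed.

Definition diag n : {set 'I_n * 'I_n} := [set c | c.1 == c.2].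

Lemma card_diag n : #|diag n| = n.
Proof.
have -> : diag n = [set (i, i) | i : 'I_n].
  apply/setP => -[i j]; rewrite !inE /=; apply/eqP/imsetP.
  - by move=> ->; exists j.
  - by case=> k _ [-> ->].
by rewrite card_imset ?card_ord // => i j [].
Qed.

Lemma cells_count n (S : finType) (L : 'I_n -> 'I_n -> S) (s : S) :
  latin_square L -> #|[set c : 'I_n * 'I_n | L c.1 c.2 == s]| = n.
Proof.
case=> cS rows cols.
set X := [set c : 'I_n * 'I_n | L c.1 c.2 == s].
have inj : {in X &, injective (fun c : 'I_n * 'I_n => c.1)}.
  move=> [i j] [i' j']; rewrite !inE /= => /eqP e1 /eqP e2 ei; subst i'.
  case: (rows i) => g gK _; congr pair.
  by rewrite -(gK j) -(gK j') e1 e2.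
rewrite -(card_in_imset inj).
have -> : [set c.1 | c in X] = setT.
  apply/setP => i; rewrite inE; case: (rows i) => g _ Kg.
  by apply/imsetP; exists (i, g s) => //; rewrite inE /= Kg.
by rewrite cardsT card_ord.
Qed.

Lemma diag_parity n (S : finType) (L : 'I_n -> 'I_n -> S) (s : S) :
  latin_square L -> symmetric_square L ->
  #|[set c in [set c : 'I_n * 'I_n | L c.1 c.2 == s] | swp c == c]| = n %[mod 2].
Proof.
move=> hL hS; rewrite -[n in _ = n %[mod 2]](cells_count s hL).
symmetry; apply: invol_parity; first exact: swpK.
by move=> [i j]; rewrite !inE /= hS.
Qed.

Lemma tr_transversal n (S : finType) (L : 'I_n -> 'I_n -> S) (T : {set 'I_n * 'I_n}) :
  symmetric_square L -> Defs.is_transversal L T -> Defs.is_transversal L (swp @^-1: T).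
Proof.
move=> hS /and4P[c1 c2 c3 c4]; apply/and4P; split.
- by rewrite card_preimset //; exact: swp_inj.
- apply/forallP => i.
  have -> : [set c in swp @^-1: T | c.1 == i] = swp @^-1: [set c in T | c.2 == i].
    by apply/setP => c; rewrite !inE.
  by rewrite card_preimset; [exact: (forallP c3) | exact: swp_inj].
- apply/forallP => i.
  have -> : [set c in swp @^-1: T | c.2 == i] = swp @^-1: [set c in T | c.1 == i].
    by apply/setP => c; rewrite !inE.
  by rewrite card_preimset; [exact: (forallP c2) | exact: swp_inj].
- apply/forall_inP => c; rewrite inE => cT; apply/forall_inP => d; rewrite inE => dT.
  apply/implyP => e.
  have := (implyP ((forall_inP ((forall_inP c4) _ cT)) _ dT)).
  rewrite /= (hS c.2) (hS d.2) e => /(_ isT) /eqP h.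
  by rewrite -(swpK c) h swpK.
Qed.

Lemma fixed_diag n (S : finType) (L : 'I_n -> 'I_n -> S) (T : {set 'I_n * 'I_n}) :
  symmetric_square L -> Defs.is_transversal L T -> swp @^-1: T = T -> T = diag n.
Proof.
move=> hS hT hfix; have /and4P[c1 _ _ c4] := hT.
apply/eqP; rewrite eqEcard card_diag (eqP c1) leqnn andbT.
apply/subsetP => c cT.
have sT : swp c \in T by move: cT; rewrite -{1}hfix inE.
have := (implyP ((forall_inP ((forall_inP c4) _ cT)) _ sT)).
rewrite /= (hS c.2) eqxx => /(_ isT) /eqP e.
by rewrite inE {1}e.
Qed.

Lemma diag_transversal n (S : finType) (L : 'I_n -> 'I_n -> S) :
  injective (fun i => L i i) -> Defs.is_transversal L (diag n).
Proof.
move=> inj; apply/and4P; split.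
- by rewrite card_diag.
- apply/forallP => i.
  have -> : [set c in diag n | c.1 == i] = [set (i, i)].
    apply/setP => -[a b]; rewrite !inE /= xpair_eqE.
    by case: (eqVneq a i) => [->|]; rewrite ?andbT ?andbF // eq_sym.
  by rewrite cards1.
- apply/forallP => i.
  have -> : [set c in diag n | c.2 == i] = [set (i, i)].
    apply/setP => -[a b]; rewrite !inE /= xpair_eqE.
    by case: (eqVneq b i) => [->|]; rewrite ?andbT ?andbF.
  by rewrite cards1.
- apply/forall_inP => -[a b]; rewrite inE /= => /eqP <-.
  apply/forall_inP => -[c d]; rewrite inE /= => /eqP <-.
  by apply/implyP => /eqP /inj ->.
Qed.

Lemma diag_inj n (S : finType) (L : 'I_n -> 'I_n -> S) :
  Defs.is_transversal L (diag n) -> injective (fun i => L i i).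
Proof.
move=> /and4P[_ _ _ c4] i j e.
have di : (i, i) \in diag n by rewrite inE.
have dj : (j, j) \in diag n by rewrite inE.
have := (implyP ((forall_inP ((forall_inP c4) _ di)) _ dj)).
by rewrite /= e eqxx => /(_ isT) /eqP [].
Qed.

Lemma odd_inj n (S : finType) (L : 'I_n -> 'I_n -> S) :
  latin_square L -> symmetric_square L -> odd n -> injective (fun i => L i i).
Proof.
move=> hL hS on.
have surj : forall s, exists i, L i i = s.
  move=> s; have := diag_parity s hL hS; rewrite !modn2 on.
  set F := [set c in _ | _] => hF.
  have : 0 < #|F| by case: #|F| hF.
  case/card_gt0P => -[i j]; rewrite !inE /swp /= xpair_eqE => /andP[/eqP e /andP[/eqP ji _]].
  by subst j; exists i.
case: hL => cS _ _.
apply/injectiveP; apply/card_uniqP.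
set s0 := [seq _ | _ <- _].
have hs : size s0 = n by rewrite size_map -cardE card_ord.
apply/eqP; rewrite eqn_leq card_size hs /=.
rewrite -{1}cS; apply/subset_leq_card/subsetP => s _.
case: (surj s) => i <-; apply/mapP; exists i => //; by rewrite mem_enum.
Qed.

Lemma even_not_transversal n (S : finType) (L : 'I_n -> 'I_n -> S) :
  0 < n -> latin_square L -> symmetric_square L -> ~~ odd n ->
  ~~ Defs.is_transversal L (diag n).
Proof.
move=> hn hL hS en; apply/negP => /diag_inj inj.
set i0 := Ordinal hn.
have := diag_parity (L i0 i0) hL hS.
have -> : [set c in [set c : 'I_n * 'I_n | L c.1 c.2 == L i0 i0] | swp c == c]
          = [set (i0, i0)].
  apply/setP => -[a b]; rewrite !inE /swp /= !xpair_eqE.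
  apply/idP/idP.
  - move=> /andP[/eqP e /andP[/eqP eb _]]; subst b.
    by rewrite (inj _ _ e) eqxx.
  - by move=> /andP[/eqP -> /eqP ->]; rewrite !eqxx.
by rewrite cards1 !modn2 (negbTE en).
Qed.

Theorem theorem4p5 (n : nat) (S : finType) (L : 'I_n -> 'I_n -> S) (hn : 0 < n) :
  latin_square L -> symmetric_square L ->
  num_transversals L = n %[mod 2].
Proof.
move=> hL hS; rewrite /num_transversals.
rewrite (@invol_parity _ (fun T : {set 'I_n * 'I_n} => swp @^-1: T)); first last.
- by move=> T; rewrite !inE; exact: tr_transversal.
- by move=> T; apply/setP => c; rewrite !inE swpK.
set F := [set x in _ | _].
have -> : #|F| = odd n.
  case: (boolP (odd n)) => on.
  - have -> : F = [set diag n].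
      apply/setP => T; rewrite !inE; apply/idP/idP.
      + by move=> /andP[hT /eqP hf]; rewrite (fixed_diag hS hT hf).
      + move=> /eqP ->; rewrite (diag_transversal (odd_inj hL hS on)) /=.
        by apply/eqP/setP => -[a b]; rewrite !inE /= eq_sym.
    by rewrite cards1.
  - apply/eqP; rewrite cards_eq0; apply/eqP/setP => T; rewrite !inE.
    apply/negP => /andP[hT /eqP hf].
    have := even_not_transversal hn hL hS on.
    by rewrite -(fixed_diag hS hT hf) hT.
by rewrite !modn2 oddb.
Qed.
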